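(* Let $X$ be an irreducible Markov chain on a finite state space $\overline{F}$ with transition matrix $r$ which is reversible for its stationary distribution $\eta=(\eta_j:j\in\overline{F})$, and let $\boldsymbol{\alpha}=(\alpha_j:j\in\overline{F})\in[0,1]^{\overline{F}}$ be non-zero. Let $r^{(\boldsymbol{\alpha})}_{skip}=(I-rI_{(1-\boldsymbol{\alpha})})^{-1}rI_{\boldsymbol{\alpha}}$ be the modification of $r$ by randomized skipping, and let $r^{(\boldsymbol{\alpha})}_{refl}$ be the modification of $r$ by randomized reflection, i.e. $r^{(\boldsymbol{\alpha})}_{refl}(i,j)=r(i,j)\alpha_j$ for $i\neq j$ and $r^{(\boldsymbol{\alpha})}_{refl}(i,i)=1-\sum_{j\neq i}r(i,j)\alpha_j$. Then $r^{(\boldsymbol{\alpha})}_{refl}\prec_P r^{(\boldsymbol{\alpha})}_{skip}$.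
   Context: $I_{\boldsymbol{\alpha}}$, $I_{(1-\boldsymbol{\alpha})}$ are the diagonal matrices with entries $\alpha_j$, resp. $1-\alpha_j$. Peskun order: for transition matrices $r,r'$ on a finite set $\overline{F}$ with $\xi r=\xi r'=\xi$ for some probability vector $\xi$, one writes $r'\prec_P r$ if $r'(j,i)\le r(j,i)$ for all $i,j\in\overline{F}$ with $i\neq j$. (Both modifications have stationary distribution proportional to $(\eta_j\alpha_j:j\in\overline{F})$.) *)

(* Defs.v *)
From HB Require Import structures.
From mathcomp Require Import all_boot all_order all_algebra.
Set Implicit Arguments. Unset Strict Implicit. Unset Printing Implicit Defensive.
Import Order.TTheory GRing.Theory Num.Theory.
Local Open Scope ring_scope.

(* State space \overline{F} = 'I_n ; matrices 'M[R]_n ; probability (row) vectors 'rV[R]_n. *)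

Definition stochastic (R : realFieldType) (n : nat) (r : 'M[R]_n) : Prop :=
  (forall i j, 0 <= r i j) /\ (forall i, \sum_j r i j = 1).

Definition prob_vec (R : realFieldType) (n : nat) (xi : 'rV[R]_n) : Prop :=
  (forall j, 0 <= xi 0 j) /\ \sum_j xi 0 j = 1.

Definition stationary (R : realFieldType) (n : nat) (r : 'M[R]_n) (xi : 'rV[R]_n) : Prop :=
  prob_vec xi /\ xi *m r = xi.

Definition irreducible (R : realFieldType) (n : nat) (r : 'M[R]_n) : Prop :=
  forall i j, exists k : nat, 0 < (r ^+ k) i j.

Definition reversible (R : realFieldType) (n : nat) (r : 'M[R]_n) (eta : 'rV[R]_n) : Prop :=
  forall i j, eta 0 i * r i j = eta 0 j * r j i.

Definition I_alpha (R : realFieldType) (n : nat) (alpha : 'rV[R]_n) : 'M[R]_n :=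
  diag_mx alpha.
Definition I_one_minus_alpha (R : realFieldType) (n : nat) (alpha : 'rV[R]_n) : 'M[R]_n :=
  diag_mx (\row_j (1 - alpha 0 j)).

Definition r_skip (R : realFieldType) (n : nat) (r : 'M[R]_n) (alpha : 'rV[R]_n) : 'M[R]_n :=
  invmx (1%:M - r *m I_one_minus_alpha alpha) *m r *m I_alpha alpha.

Definition r_refl (R : realFieldType) (n : nat) (r : 'M[R]_n) (alpha : 'rV[R]_n) : 'M[R]_n :=
  \matrix_(i, j) if i != j then r i j * alpha 0 j
                 else 1 - \sum_(k | k != i) r i k * alpha 0 k.

Definition peskun_le (R : realFieldType) (n : nat) (r' r : 'M[R]_n) : Prop :=
  (exists xi : 'rV[R]_n, prob_vec xi /\ xi *m r = xi /\ xi *m r' = xi) /\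
  (forall i j : 'I_n, i != j -> r' j i <= r j i).

(* Main.v *)
Require Import Defs.
From HB Require Import structures.
From mathcomp Require Import all_boot all_order all_algebra ring lra.
Import Order.TTheory GRing.Theory Num.Theory.
Local Open Scope ring_scope.

Definition nonneg {R : realFieldType} {m p} (A : 'M[R]_(m,p)) := forall i j, 0 <= A i j.

Lemma nonneg_mul (R : realFieldType) m p q (A : 'M[R]_(m,p)) (B : 'M[R]_(p,q)) :
  nonneg A -> nonneg B -> nonneg (A *m B).
Proof. move=> hA hB i j; rewrite mxE; apply: sumr_ge0 => k _; exact: mulr_ge0. Qed.

Lemma nonneg_exp (R : realFieldType) n (r : 'M[R]_n) k : nonneg r -> nonneg (r ^+ k).
Proof.
move=> hr; elim: k => [|k IH].
  by move=> i j; rewrite expr0 -idmxE mxE; case: (i == j).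
by rewrite exprSr -mulmxE; apply: nonneg_mul.
Qed.

Lemma sum_gt0_ex (R : realFieldType) n (F : 'I_n -> R) : 0 < \sum_j F j -> exists j, 0 < F j.
Proof.
move=> h; case: (boolP [exists j, 0 < F j]) => [/existsP//|/existsPn hn].
have : \sum_j F j <= 0 by apply: sumr_le0 => j _; rewrite leNgt; apply: hn.
by rewrite leNgt h.
Qed.

Lemma prod_pos (R : realFieldType) (a b : R) : 0 <= a -> 0 <= b -> 0 < a * b -> 0 < a /\ 0 < b.
Proof.
move=> ha hb hab; rewrite !lt_def ha hb !andbT; split; apply/eqP => e;
  by move: hab; rewrite e ?mul0r ?mulr0 ltxx.
Qed.

Lemma pow_dec (R : realFieldType) n (r : 'M[R]_n) k i j : nonneg r ->
  0 < (r ^+ k.+1) i j -> exists l, 0 < (r ^+ k) i l /\ 0 < r l j.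
Proof.
move=> hr; rewrite exprSr -mulmxE mxE => /sum_gt0_ex [l hl].
exists l; apply: prod_pos => //; exact: nonneg_exp.
Qed.
Arguments nonneg_mul {R m p q A B}.

Lemma Qe (R : realFieldType) n (r : 'M[R]_n) alpha i k :
  (r *m I_one_minus_alpha alpha) i k = r i k * (1 - alpha 0 k).
Proof. by rewrite /I_one_minus_alpha mul_mx_diag !mxE. Qed.

Lemma mono (R : realFieldType) n (r : 'M[R]_n) (alpha : 'rV[R]_n) :
  stochastic r -> irreducible r -> (forall j, 0 <= alpha 0 j <= 1) ->
  (exists j0, 0 < alpha 0 j0) ->
  forall y : 'cV[R]_n,
  (forall i, 0 <= ((1%:M - r *m I_one_minus_alpha alpha) *m y) i 0) ->
  forall i, 0 <= y i 0.
Proof.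
move=> [r0 r1] irr ha [j0 hj0] y hy i1.
rewrite leNgt; apply/negP => hneg.
case: (@arg_minP _ _ _ i1 xpredT (fun i => y i 0)) => // i0 _ hmin.
set m := y i0 0.
have mneg : m < 0 by apply: le_lt_trans (hmin i1 _) hneg.
have key : forall i, y i 0 = m -> forall j, 0 < r i j -> y j 0 = m /\ alpha 0 j = 0.
  move=> i yi j rij.
  have h := hy i.
  rewrite mulmxBl mul1mx 3!mxE yi in h.
  pose d := fun k => r i k * (1 - alpha 0 k) * (y k 0 - m) + (- m) * (r i k * alpha 0 k).
  have d0 : forall k, 0 <= d k.
    move=> k; have := ha k => /andP [a0 a1].
    apply: addr_ge0; apply: mulr_ge0; rewrite ?mulr_ge0 ?subr_ge0 ?r0 ?hmin //.
    by rewrite oppr_ge0 ltW.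
  have dsum : \sum_k d k = \sum_k ((r *m I_one_minus_alpha alpha) i k * y k 0) - m * \sum_k r i k.
    rewrite mulr_sumr -sumrB; apply: eq_bigr => k _; rewrite Qe /d; ring.
  rewrite r1 mulr1 in dsum.
  have dz : \sum_k d k = 0.
    apply/le_anti; rewrite sumr_ge0 ?andbT // dsum.
    by move: h; rewrite !subr_ge0 subr_le0.
  have := psumr_eq0P (fun k _ => d0 k) dz (i:=j) isT.
  have [a0 a1] := andP (ha j).
  have t1 : 0 <= r i j * (1 - alpha 0 j) * (y j 0 - m).
    by rewrite !mulr_ge0 ?r0 ?subr_ge0 ?hmin.
  have t2 : 0 <= (- m) * (r i j * alpha 0 j).
    by rewrite !mulr_ge0 ?r0 // oppr_ge0 ltW.
  move/eqP; rewrite /d (paddr_eq0 t1 t2).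
  case/andP => e1 e2.
  have aj : alpha 0 j = 0.
    move: e2; rewrite !mulf_eq0 oppr_eq0 (lt_eqF mneg) (gt_eqF rij) /=.
    by move/eqP.
  split => //.
  move: e1; rewrite aj subr0 mulr1 mulf_eq0 (gt_eqF rij) subr_eq0 /=.
  by move/eqP.
have path : forall k i j, y i 0 = m -> 0 < (r ^+ k) i j -> y j 0 = m.
  elim => [|k IH] i j yi.
    rewrite expr0 -idmxE mxE; case: (i =P j) => [<- //|_].
    by rewrite ltxx.
  move/pow_dec => [//|l [h1 h2]]; exact: (key l (IH i l yi h1) j h2).1.
have [k hk] := irr i0 j0.
have yj0 := path k i0 j0 erefl hk.
have [j1 hj1] : exists j1, 0 < r j0 j1 by apply: sum_gt0_ex; rewrite r1 ltr01.
have [yj1 aj1] := key j0 yj0 j1 hj1.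
have [k' hk'] := irr j1 j0.
case: k' hk' => [|k'].
  rewrite expr0 -idmxE mxE; case: (j1 =P j0) => [e|_]; last by rewrite ltxx.
  by move: hj0; rewrite -e aj1 ltxx.
move/pow_dec => [//|l [h1 h2]].
have := (key l (path k' j1 l yj1 h1) j0 h2).2.
by move=> e; move: hj0; rewrite e ltxx.
Qed.

Theorem proposition2p10 (R : realFieldType) (n : nat) (r : 'M[R]_n)
  (eta : 'rV[R]_n) (alpha : 'rV[R]_n) :
  stochastic r ->
  irreducible r ->
  stationary r eta ->
  reversible r eta ->
  (forall j, 0 <= alpha 0 j <= 1) ->
  alpha != 0 ->
  peskun_le (r_refl r alpha) (r_skip r alpha).
Proof.
move=> hr irr [[eta0 eta1] etar] rev ha anz.
have [r0 r1] := hr.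
have [j0 hj0] : exists j0, 0 < alpha 0 j0.
  case: (boolP [exists j, alpha 0 j != 0]) => [/existsP [j hj]|/existsPn hn].
    exists j; rewrite lt_def hj; by case/andP: (ha j).
  move/eqP: anz; case; apply/matrixP => i j; rewrite [i]ord1 mxE.
  by move/negPn/eqP: (hn j).
have monoM := @mono R n r alpha hr irr ha (ex_intro _ j0 hj0).
set B := I_one_minus_alpha alpha.
set A := I_alpha alpha.
set M := 1%:M - r *m B.
have Mu : M \in unitmx.
  rewrite unitmxE unitfE; apply/negP; rewrite -det_tr => /det0P [v vn0 hv].
  have hy : M *m v^T = 0 by rewrite -[M]trmxK -trmx_mul hv trmx0.
  move/eqP: vn0; apply; apply/matrixP => i j; rewrite [i]ord1 mxE.
  apply/le_anti/andP; split.
    have := monoM (- v^T) _ j; rewrite !mxE oppr_ge0; apply => k.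
    by rewrite mulmxN hy oppr0 mxE.
  have := monoM (v^T) _ j; rewrite !mxE; apply => k.
  by rewrite hy mxE.
set N := invmx M.
have Nnn : nonneg N.
  move=> i k.
  have := monoM (col k N) _ i; rewrite mxE; apply => l.
  rewrite colE mulmxA mulmxV // mul1mx mxE.
  by case: (_ && _).
have NQ : N = 1%:M + N *m (r *m B).
  have e : N *m M = 1%:M by apply: mulVmx.
  by rewrite /M mulmxBr mulmx1 in e; rewrite -e subrK.
have AB : 1%:M - B = A.
  apply/matrixP => i j; rewrite /B /A /I_alpha /I_one_minus_alpha !mxE.
  by case: (i == j) => /=; rewrite ?mulr1n ?mulr0n; ring.
have Bnn : nonneg B.
  move=> i j; rewrite /B /I_one_minus_alpha !mxE; apply: mulrn_wge0.
  by rewrite subr_ge0; case/andP: (ha i).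
have Ann : nonneg A.
  move=> i j; rewrite /A /I_alpha !mxE; apply: mulrn_wge0.
  by case/andP: (ha i).
have etaA : forall k, (eta *m A) 0 k = eta 0 k * alpha 0 k.
  by move=> k; rewrite /A /I_alpha mul_mx_diag mxE.
have etak : forall k, eta *m r ^+ k = eta.
  elim => [|k IH]; first by rewrite expr0 -idmxE mulmx1.
  by rewrite exprSr -mulmxE mulmxA IH.
have [i hi] : exists i, 0 < eta 0 i by apply: sum_gt0_ex; rewrite eta1 ltr01.
have etaj0 : 0 < eta 0 j0.
  have [k hk] := irr i j0.
  rewrite -(etak k) mxE (bigD1 i) //=.
  have : 0 <= \sum_(l | l != i) eta 0 l * (r ^+ k) l j0.
    by apply: sumr_ge0 => l _; apply: mulr_ge0 => //; apply: nonneg_exp.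
  have := mulr_gt0 hi hk; lra.
pose S := \sum_j eta 0 j * alpha 0 j.
have Spos : 0 < S.
  rewrite /S (bigD1 j0) //=.
  have : 0 <= \sum_(l | l != j0) eta 0 l * alpha 0 l.
    by apply: sumr_ge0 => l _; apply: mulr_ge0 => //; case/andP: (ha l).
  have := mulr_gt0 etaj0 hj0; lra.
have etaM : eta *m A *m N = eta.
  have -> : eta *m A = eta *m M.
    by rewrite /M -AB !mulmxBr !mulmx1 mulmxA etar.
  by rewrite -mulmxA mulmxV // mulmx1.
split.
  exists (S^-1 *: (eta *m A)); split; [|split].
  - split.
      move=> j; rewrite mxE etaA; apply: mulr_ge0; first by rewrite invr_ge0 ltW.
      by apply: mulr_ge0 => //; case/andP: (ha j).
    rewrite (eq_bigr (fun j => S^-1 * (eta 0 j * alpha 0 j))); last by move=> j _; rewrite mxE etaA.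
    by rewrite -mulr_sumr mulVf // gt_eqF.
  - rewrite -scalemxAl; congr (_ *: _).
    rewrite /r_skip -/B -/M -/N !mulmxA etaM etar.
    done.
  - rewrite -scalemxAl; congr (_ *: _).
    apply/matrixP => i0 j; rewrite [i0]ord1 mxE etaA.
    under eq_bigr => k _ do rewrite etaA mxE.
    rewrite (bigD1 j) //= eqxx /=.
    rewrite [X in _ + X](eq_bigr (fun k => eta 0 j * alpha 0 j * (r j k * alpha 0 k))); last first.
      move=> k hk; rewrite hk; have e := rev k j.
      transitivity ((eta 0 k * r k j) * alpha 0 k * alpha 0 j); first ring.
      by rewrite e; ring.
    rewrite -mulr_sumr; ring.
clear i hi etaj0. move=> i j hij.
rewrite /r_refl mxE eq_sym hij /r_skip -/B -/M -/N NQ mulmxDl mul1mx mulmxDl mxE.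
rewrite -/A {1}/A /I_alpha mul_mx_diag mxE lerDl.
have rnn : nonneg r by [].
exact: (nonneg_mul (nonneg_mul (nonneg_mul Nnn (nonneg_mul rnn Bnn)) rnn) Ann).
Qed.
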